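(* Let $\bar\mu,\sigma_1,\dots,\sigma_q>0$, $R_1\in\mathbb{S}^{n_1}_+,\dots,R_q\in\mathbb{S}^{n_q}_+$, $W\in\mathbb{S}^n_+$, and $Z,J\in\mathbb{R}^{m\times n}$. Define $L:=[ZW^{-1}\ \ J]\in\mathbb{R}^{m\times2n}$, $R(\tau):=\bigoplus_{i=1}^qR_ie^{\sigma_i\tau_i}$, $\widehat P(\tau):=W^{-1}\oplus R(\tau)$, $$\mathcal{L}:=\{\bar x\in\mathbb{R}^{2n}:\ |L_{(i)}\bar x|\le\bar u_i,\ i=1,\dots,m\},\qquad \mathcal{Q}_{\bar\mu}:=\{(\bar x,\tau)\in\mathbb{R}^{2n}\times\mathcal{T}:\ \bar x^{\mathsf T}\widehat P(\tau)\bar x\le\bar\mu\}.$$ Assume $$\begin{bmatrix}W&0&Z_{(i)}^{\mathsf T}\\ \star&\bigoplus_{j=1}^qR_j&J_{(i)}^{\mathsf T}\\ \star&\star&\frac{\bar u_i^2}{\bar\mu}\end{bmatrix}\succeq0\qquad\forall i\in\{1,\dots,m\}.$$ Then $\mathcal{Q}_{\bar\mu}\subset\mathcal{L}\times\mathcal{T}$.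
   Context: Integers $n,m\ge1$, $1\le q\le n$, $n_1,\dots,n_q\ge1$ with $\sum n_i=n$; $\bar u=(\bar u_1,\dots,\bar u_m)$ with $\bar u_i>0$; positive reals $T_2^{(1)},\dots,T_2^{(q)}$ and $\mathcal{T}=\prod_i[0,T_2^{(i)}]$. Notation: $\mathbb{S}^k_+$ symmetric positive definite $k\times k$ matrices; $\bigoplus$ block-diagonal direct sum; $\star$ symmetric blocks; $M_{(i)}$ the $i$-th row of $M$. *)

(* Defs.v *)
From HB Require Import structures.
From mathcomp Require Import all_boot all_order all_algebra.
From mathcomp Require Import all_classical all_reals all_analysis.
Set Implicit Arguments. Unset Strict Implicit. Unset Printing Implicit Defensive.
Import Order.TTheory GRing.Theory Num.Theory.
Local Open Scope ring_scope.

Definition posdef (R : realType) (k : nat) (M : 'M[R]_k) : Prop :=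
  M^T = M /\ forall x : 'cV[R]_k, x != 0 -> 0 < (x^T *m M *m x) 0 0.

Definition psd (R : realType) (k : nat) (M : 'M[R]_k) : Prop :=
  M^T = M /\ forall x : 'cV[R]_k, 0 <= (x^T *m M *m x) 0 0.

Definition Rtau (R : realType) (q : nat) (n_ : 'I_q -> nat)
  (Rb : forall i : 'I_q, 'M[R]_(n_ i)) (sigma tau : 'I_q -> R)
  : 'M[R]_(\sum_(i < q) n_ i) :=
  \mxdiag_(i < q) (expR (sigma i * tau i) *: Rb i).

Definition Phat (R : realType) (q : nat) (n_ : 'I_q -> nat)
  (W : 'M[R]_(\sum_(i < q) n_ i))
  (Rb : forall i : 'I_q, 'M[R]_(n_ i)) (sigma tau : 'I_q -> R)
  : 'M[R]_(\sum_(i < q) n_ i + \sum_(i < q) n_ i) :=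
  block_mx (invmx W) 0 0 (Rtau Rb sigma tau).

Definition Lmx (R : realType) (m n : nat) (W : 'M[R]_n) (Z J : 'M[R]_(m, n))
  : 'M[R]_(m, n + n) := row_mx (Z *m invmx W) J.

Definition lmi_mx (R : realType) (q m : nat) (n_ : 'I_q -> nat)
  (W : 'M[R]_(\sum_(i < q) n_ i)) (Rb : forall i : 'I_q, 'M[R]_(n_ i))
  (Z J : 'M[R]_(m, \sum_(i < q) n_ i)) (ubar : 'I_m -> R) (mu : R) (i : 'I_m)
  : 'M[R]_(\sum_(j < q) n_ j + \sum_(j < q) n_ j + 1) :=
  block_mx (block_mx W 0 0 (\mxdiag_(j < q) Rb j))
           (col_mx (row i Z)^T (row i J)^T)
           (row_mx (row i Z) (row i J))
           ((ubar i ^+ 2 / mu)%:M).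

(* Main.v *)
Require Import Defs.
From HB Require Import structures.
From mathcomp Require Import all_boot all_order all_algebra.
From mathcomp Require Import all_classical all_reals all_analysis.
From mathcomp Require Import ring lra.
Import Order.TTheory GRing.Theory Num.Theory.
Local Open Scope ring_scope.

Lemma posdef_unit (R : realType) k (M : 'M[R]_k) : posdef M -> M \in unitmx.
Proof.
move=> [Hs Hp]; rewrite -row_free_unit -kermx_eq0.
apply/eqP/row_matrixP => i; rewrite row0.
set u := row i (kermx M).
have Hu : u *m M = 0 by rewrite /u -row_mul mulmx_ker row0.
apply/eqP; apply: contraT => Hnz.
have : u^T != 0 by rewrite trmx_eq0.
move/Hp; by rewrite trmxK Hu mul0mx mxE ltxx.
Qed.

Lemma quad_mxdiag (R : realType) q (p_ : 'I_q -> nat) (D : forall i, 'M[R]_(p_ i))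
  (x : 'cV[R]_(\sum_i p_ i)) :
  x^T *m \mxdiag_i D i *m x = \sum_i ((submxcol x i)^T *m D i *m submxcol x i).
Proof.
rewrite -{1 2}[x]submxcolK tr_mxcol mul_mxrow_mxdiag mul_mxrow_mxcol.
by [].
Qed.

Lemma quad_ge (R : realType) q (p_ : 'I_q -> nat) (D : forall i, 'M[R]_(p_ i))
  (e : 'I_q -> R) (x : 'cV[R]_(\sum_i p_ i)) :
  (forall i, posdef (D i)) -> (forall i, 1 <= e i) ->
  (x^T *m \mxdiag_i D i *m x) 0 0 <= (x^T *m \mxdiag_i (e i *: D i) *m x) 0 0.
Proof.
move=> HD He; rewrite !quad_mxdiag !summxE; apply: ler_sum => i _.
set y := submxcol x i.
have H0 : 0 <= (y^T *m D i *m y) 0 0.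
  have [->|nz] := eqVneq y 0; first by rewrite mulmx0 mxE.
  by apply: ltW; apply: (HD i).2.
rewrite -scalemxAr -scalemxAl [in X in _ <= X]mxE.
have := He i; nra.
Qed.

Lemma tr11 (R : realType) (M : 'M[R]_1) : M^T = M.
Proof. by rewrite [M]mx11_scalar tr_scalar_mx. Qed.

Lemma lmi_quad (R : realType) k (A : 'M[R]_k) (b : 'cV[R]_k) (c : R) (y : 'cV[R]_k) (t : R) :
  ((col_mx y t%:M)^T *m block_mx A b b^T c%:M *m col_mx y t%:M) 0 0
  = (y^T *m A *m y) 0 0 + 2 * t * (b^T *m y) 0 0 + t ^+ 2 * c.
Proof.
rewrite tr_col_mx tr_scalar_mx mul_row_block mul_row_col !mul_scalar_mx !mul_mx_scalar.
rewrite mulmxDl -scalemxAl.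
have E : y^T *m b = b^T *m y.
  by rewrite -(@tr11 _ (y^T *m b)) trmx_mul trmxK.
rewrite E.
move: (y^T *m A *m y) (b^T *m y) => P Q.
rewrite !mxE eqxx /=. ring.
Qed.

Lemma block_quad (R : realType) k1 k2 (A : 'M[R]_k1) (D : 'M[R]_k2) (y : 'cV[R]_(k1 + k2)) :
  (y^T *m block_mx A 0 0 D *m y) 0 0
  = ((usubmx y)^T *m A *m usubmx y) 0 0 + ((dsubmx y)^T *m D *m dsubmx y) 0 0.
Proof.
rewrite -{1 2}[y]vsubmxK tr_col_mx mul_row_block !mulmx0 addr0 add0r mul_row_col mxE.
by [].
Qed.

Theorem lemma3 (R : realType) (q m : nat) (n_ : 'I_q -> nat)
  (ubar : 'I_m -> R) (T2 : 'I_q -> R)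
  (mu : R) (sigma : 'I_q -> R)
  (Rb : forall i : 'I_q, 'M[R]_(n_ i))
  (W : 'M[R]_(\sum_(i < q) n_ i)) (Z J : 'M[R]_(m, \sum_(i < q) n_ i)) :
  (1 <= m)%N -> (1 <= q)%N -> (q <= \sum_(i < q) n_ i)%N ->
  (forall i, (1 <= n_ i)%N) ->
  (forall i, 0 < ubar i) -> (forall i, 0 < T2 i) ->
  0 < mu -> (forall i, 0 < sigma i) ->
  (forall i, posdef (Rb i)) -> posdef W ->
  (forall i : 'I_m, psd (lmi_mx W Rb Z J ubar mu i)) ->
  forall (x : 'cV[R]_(\sum_(i < q) n_ i + \sum_(i < q) n_ i)) (tau : 'I_q -> R),
    (forall j, 0 <= tau j <= T2 j) ->
    (x^T *m Phat W Rb sigma tau *m x) 0 0 <= mu ->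
    (forall i : 'I_m, `|(row i (Lmx W Z J) *m x) 0 0| <= ubar i) /\
    (forall j, 0 <= tau j <= T2 j).
Proof.
move=> _ _ _ _ Hu _ Hmu Hsig HR HW HL x tau Htau Hq; split => // i.
have WU := @posdef_unit _ _ _ HW.
have HWs := HW.1.
rewrite /Phat block_quad in Hq.
set x1 := usubmx x in Hq; set x2 := dsubmx x in Hq.
have HRt : (x2^T *m \mxdiag_j Rb j *m x2) 0 0 <= (x2^T *m Rtau Rb sigma tau *m x2) 0 0.
  apply: quad_ge => // j.
  apply: le_trans (expR_ge1Dx _).
  have := Htau j; have := Hsig j; move=> h1 /andP[h2 _].
  rewrite lerDl; exact: mulr_ge0 (ltW h1) h2.
set y1 := invmx W *m x1.
have Hy1 : (y1^T *m W *m y1) 0 0 = (x1^T *m invmx W *m x1) 0 0.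
  rewrite /y1 trmx_mul -!mulmxA (mulmxA W) mulmxV // mul1mx trmx_inv HWs.
  by rewrite mulmxA.
set s := (row i (Lmx W Z J) *m x) 0 0.
have Hs : s = (row i Z *m y1 + row i J *m x2) 0 0.
  rewrite /s /Lmx row_row_mx row_mul -[in LHS](vsubmxK x) mul_row_col -mulmxA.
  by [].
set a := (y1^T *m W *m y1) 0 0 + (x2^T *m \mxdiag_j Rb j *m x2) 0 0.
set c := ubar i ^+ 2 / mu.
have key t : 0 <= a + 2 * t * s + t ^+ 2 * c.
  have := (HL i).2 (col_mx (col_mx y1 x2) t%:M).
  rewrite /lmi_mx.
  have -> : row_mx (row i Z) (row i J) = (col_mx (row i Z)^T (row i J)^T)^T
    by rewrite tr_col_mx !trmxK.
  rewrite lmi_quad block_quad col_mxKu col_mxKd tr_col_mx !trmxK mul_row_col -Hs.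
  by [].
have Ha : a <= mu by rewrite /a Hy1; lra.
have Hc : 0 < c by rewrite /c divr_gt0 // exprn_gt0.
have H := key (- s / c).
have Hc0 : c != 0 by rewrite gt_eqF.
have H2 : 0 <= a * c - s ^+ 2.
  have -> : a * c - s ^+ 2 = (a + 2 * (- s / c) * s + (- s / c) ^+ 2 * c) * c by field.
  by apply: mulr_ge0 => //; exact: ltW.
have Hmc : mu * c = ubar i ^+ 2 by rewrite /c; field; rewrite gt_eqF.
have Hac : a * c <= ubar i ^+ 2 by rewrite -Hmc ler_pM2r.
have Hui := Hu i.
rewrite ler_norml; apply/andP; split; nra.
Qed.
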